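(* Let $G$ be a connected graph, let $e=\{x,y\}$ and $f=\{u,v\}$ be edges of $G$, and consider the edges $e_{\bar{x}}=\{\bar{x},\overline{xy}\}$ and $f_{\bar{u}}=\{\bar{u},\overline{uv}\}$ of the full subdivision $S(G)$. If $e_{\bar{x}}\,\Theta^\ast_{S(G)}\,f_{\bar{u}}$, then $e\,\Theta^\ast_G\,f$.
   Context: For a connected graph $H$ with shortest-path distance $d_H$, two edges $\{x,y\}$ and $\{u,v\}$ of $H$ are in relation $\Theta_H$ if $d_H(x,u)+d_H(y,v)\neq d_H(x,v)+d_H(y,u)$; $\Theta^\ast_H$ denotes the transitive closure of $\Theta_H$ (an equivalence relation on $E(H)$). The full subdivision $S(G)$ is obtained by subdividing every edge of $G$ exactly once; the vertex of $S(G)$ corresponding to a vertex $x$ of $G$ is denoted $\bar{x}$, and the vertex subdividing the edge $\{x,y\}$ is denoted $\overline{xy}$. For $e=\{x,y\}\in E(G)$, $e_{\bar{x}}=\{\bar{x},\overline{xy}\}$ and $e_{\bar{y}}=\{\bar{y},\overline{xy}\}$. *)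

(* Defs.v *)
From Stdlib Require Import Relation_Definitions Relation_Operators.
From mathcomp Require Import all_boot.
Set Implicit Arguments. Unset Strict Implicit. Unset Printing Implicit Defensive.

Section Graphs.
Variable V : finType.
Variable adj : rel V.

Definition simple_graph : Prop := symmetric adj /\ irreflexive adj.
Definition connected_graph : Prop := forall x y : V, connect adj x y.

Fixpoint ball (n : nat) (x : V) : {set V} :=
  match n with
  | 0 => [set x]
  | n'.+1 => ball n' x :|: [set z | [exists w in ball n' x, adj w z]]
  end.

(* shortest-path distance: least n with y in ball n x (distances in a
   connected graph on |V| vertices are < |V|) *)
Definition dist (x y : V) : nat := find (fun n => y \in ball n x) (iota 0 #|V|).

(* Theta relation on (oriented) edges, i.e. ordered pairs (x,y) with adj x y.
   The defining condition is invariant under reversing both edges. *)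
Definition Theta (e f : V * V) : Prop :=
  [/\ adj e.1 e.2, adj f.1 f.2 &
      dist e.1 f.1 + dist e.2 f.2 <> dist e.1 f.2 + dist e.2 f.1].

Definition ThetaStar : relation (V * V) := clos_trans (V * V) Theta.

(* Full subdivision S(G): vertices are those of G plus one vertex per edge
   of G (an edge {x,y} being represented by the 2-set [set x; y]). *)
Definition is_edge (A : {set V}) : bool :=
  [exists x, exists y, adj x y && (A == [set x; y])].

Definition edgeT := {A : {set V} | is_edge A}.

Definition SV : finType := (V + edgeT)%type.

Definition sadj : rel SV := fun a b =>
  match a, b with
  | inl x, inr A => x \in val A
  | inr A, inl x => x \in val A
  | _, _ => false
  end.

Lemma is_edge_pair (x y : V) : adj x y -> is_edge [set x; y].
Proof. by move=> h; apply/existsP; exists x; apply/existsP; exists y; rewrite h eqxx. Qed.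

Definition svert (x : V) : SV := inl x.
Definition smid (x y : V) (h : adj x y) : SV :=
  inr (exist (fun A => is_edge A) [set x; y] (is_edge_pair h)).

End Graphs.

(* Main.v *)
Require Import Defs.
From Stdlib Require Import Relation_Definitions Relation_Operators.
From mathcomp Require Import all_boot.
From mathcomp Require Import zify.
Set Implicit Arguments. Unset Strict Implicit. Unset Printing Implicit Defensive.

Lemma ball_path (T : finType) (e : rel T) n x z :
  z \in ball e n x <-> exists p, [/\ path e x p, last x p = z & size p <= n].
Proof.
elim: n z => [|n IH] z /=.
  rewrite in_set1; split.
    by move/eqP->; exists [::].
  by case=> [[|? ?] [_ <- //]].
rewrite in_setU inE; split.
  case/orP => [/IH [p [pp lp sp]] | /existsP [w /andP [wb awz]]].
    by exists p; split => //; apply: leqW.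
  have [p [pp lp sp]] := (IH w).1 wb.
  exists (rcons p z); rewrite rcons_path last_rcons size_rcons pp lp awz.
  by split.
case=> p [pp lp sp]; case: (leqP (size p) n) => h.
  by apply/orP; left; apply/IH; exists p.
move: pp lp sp h; case/lastP: p => [|p w] //.
rewrite rcons_path last_rcons size_rcons => /andP [pp ew] lw sp h; subst w.
apply/orP; right; apply/existsP; exists (last x p); rewrite ew andbT.
by apply/IH; exists p; split => //; lia.
Qed.

Lemma dist_le (T : finType) (e : rel T) n x z :
  z \in ball e n x -> dist e x z <= n.
Proof.
move=> hz; rewrite /dist; case: (leqP #|T| n) => h.
  by apply: leq_trans (find_size _ _) _; rewrite size_iota.
case: (leqP (find (fun n => z \in ball e n x) (iota 0 #|T|)) n) => // h2.
have := before_find 0 h2; rewrite nth_iota // add0n hz //.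
Qed.

Lemma path_dist (T : finType) (e : rel T) x p :
  path e x p -> dist e x (last x p) <= size p.
Proof. by move=> pp; apply: dist_le; apply/ball_path; exists p. Qed.

Lemma dist_path (T : finType) (e : rel T) (Hc : forall x y, connect e x y) x z :
  exists p, [/\ path e x p, last x p = z & size p <= dist e x z].
Proof.
apply/ball_path; rewrite /dist.
have [p pp ->] := connectP (Hc x z).
case: (shortenP pp) => p' pp' up' _.
have sz : size p' < #|T|.
  by move: (max_card (mem (x :: p'))); move/card_uniqP: up' ->.
have hb : last x p' \in ball e (size p') x by apply/ball_path; exists p'.
have hh : has (fun n => last x p' \in ball e n x) (iota 0 #|T|).
  by apply/hasP; exists (size p') => //; rewrite mem_iota.
have := nth_find 0 hh; rewrite nth_iota //; last by move: hh; rewrite has_find size_iota.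
Qed.



Lemma dist_xx (T : finType) (e : rel T) x : dist e x x = 0.
Proof. by apply/eqP; rewrite -leqn0; apply: (@path_dist _ e x [::]). Qed.

Lemma dist0 (T : finType) (e : rel T) (Hc : forall x y, connect e x y) x z :
  dist e x z = 0 -> x = z.
Proof. move=> h; have [p [_ lp sp]] := dist_path Hc x z; rewrite h in sp; by case: p lp sp. Qed.

Lemma dist_tri (T : finType) (e : rel T) (Hc : forall x y, connect e x y) x w z :
  dist e x z <= dist e x w + dist e w z.
Proof.
have [p [pp <- sp]] := dist_path Hc x w.
have [q [pq <- sq]] := dist_path Hc (last x p) z.
have := @path_dist _ e x (p ++ q); rewrite cat_path pp pq last_cat size_cat => /(_ isT) h.
lia.
Qed.

Lemma dist_adj (T : finType) (e : rel T) x z : e x z -> dist e x z <= 1.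
Proof. by move=> h; apply: (@path_dist _ e x [:: z]); rewrite /= h. Qed.

Lemma dist_lip (T : finType) (e : rel T) (Hc : forall x y, connect e x y) x w z :
  e w z -> dist e x z <= dist e x w + 1.
Proof. by move=> h; apply: leq_trans (dist_tri Hc x w z) _; rewrite leq_add2l dist_adj. Qed.

Lemma path_rev (T : finType) (e : rel T) (Hs : symmetric e) x p :
  path e x p -> exists q, [/\ path e (last x p) q, last (last x p) q = x & size q = size p].
Proof.
elim: p x => [|y p IH] x /=; first by exists [::].
case/andP=> exy /IH [q [pq lq sq]]; exists (rcons q x).
by rewrite rcons_path last_rcons size_rcons pq lq Hs exy sq.
Qed.

Lemma dist_sym (T : finType) (e : rel T) (Hs : symmetric e) (Hc : forall x y, connect e x y) x z :
  dist e x z = dist e z x.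
Proof.
have H a b : dist e a b <= dist e b a.
  have [p [pp lp sp]] := dist_path Hc b a.
  have [q [pq lq sq]] := path_rev Hs pp.
  rewrite lp in pq lq; have := path_dist pq; rewrite lq sq => h; lia.
by apply/eqP; rewrite eqn_leq !H.
Qed.

Lemma dist_pred (T : finType) (e : rel T) (Hc : forall x y, connect e x y) x z :
  z != x -> exists w, e w z /\ (dist e x w).+1 = dist e x z.
Proof.
move=> nzx; have [p [pp lp sp]] := dist_path Hc x z.
move: pp lp sp; case/lastP: p => [|p w]; first by move=> _ /= h; rewrite h eqxx in nzx.
rewrite rcons_path last_rcons size_rcons => /andP [pp ew] lp sp; subst w.
exists (last x p); split => //.
have := path_dist pp; have := dist_lip Hc x ew. move: sp; move: (dist e x z) (dist e x (last x p)) (size p) => a b c; lia.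
Qed.

Lemma edge_ends (V : finType) (adj : rel V) (A : edgeT adj) :
  exists p q, adj p q /\ val A = [set p; q].
Proof.
case: A => A /= /existsP [p /existsP [q /andP [h /eqP ->]]].
by exists p, q.
Qed.

Lemma sadj_sym (V : finType) (adj : rel V) : symmetric (@sadj _ adj).
Proof. by case=> [a|A] [b|B]. Qed.

Lemma S_conn (V : finType) (adj : rel V) (Hc : connected_graph adj) :
  forall s t : SV adj, connect (@sadj _ adj) s t.
Proof.
have ll a b : connect (@sadj _ adj) (inl a) (inl b).
  have [p pp ->] := connectP (Hc a b).
  elim: p a pp => [|y p IH] a /=; first by rewrite connect0.
  case/andP=> ay /IH; apply: connect_trans.
  apply: (@connect_trans _ _ (smid ay)); apply: connect1; by rewrite /= !inE eqxx ?orbT.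
have li a t : connect (@sadj _ adj) (inl a) t.
  case: t => [b|B]; first exact: ll.
  have [p [q [_ hB]]] := edge_ends B.
  apply: connect_trans (ll a p) _; apply: connect1; by rewrite /= hB !inE eqxx.
case=> [a|A] t; first exact: li.
have [p [q [_ hA]]] := edge_ends A.
apply: (@connect_trans _ _ (inl p)); last exact: li.
by apply: connect1; rewrite /= hA !inE eqxx.
Qed.

Notation DS adj := (dist (@sadj _ adj)).

Lemma DS_ll (V : finType) (adj : rel V) (Hs : simple_graph adj) (Hc : connected_graph adj) a b :
  DS adj (inl a) (inl b) = 2 * dist adj a b.
Proof.
have HcS := S_conn Hc.
have Hcc : forall x y, connect adj x y by [].
apply/eqP; rewrite eqn_leq; apply/andP; split.
  have [p [pp <- sp]] := dist_path Hcc a b.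
  suff : DS adj (inl a) (inl (last a p)) <= 2 * size p.
    move=> h; apply: leq_trans h _; lia.
  clear sp; elim: p a pp {Hcc} => [|y p IH] a /=; first by rewrite dist_xx.
  case/andP=> ay /IH h.
  apply: leq_trans (dist_tri HcS _ (inl y) _) _.
  have : DS adj (inl a) (inl y) <= 2.
    apply: (@path_dist _ _ (inl a) [:: smid ay; inl y]).
    by rewrite /= !inE !eqxx ?orbT.
  move: h; move: (DS adj (inl a) (inl y)) (DS adj (inl y) (inl (last y p))) => u w; lia.
have [P [pP lP sP]] := dist_path HcS (inl a) (inl b).
suff : match last (inl a) P with
       | inl z => 2 * dist adj a z <= size P
       | inr A => exists2 p, p \in val A & 2 * dist adj a p + 1 <= size P end.
  by rewrite lP => h; apply: leq_trans h sP.
elim/last_ind: P pP {lP sP} => [|P s IH] /=; first by rewrite dist_xx.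
rewrite rcons_path last_rcons size_rcons => /andP [/IH h hs].
move: h hs; case: (last (inl a) P) => [z|A]; case: s => [w|B] //= h hs.
  by exists z => //; lia.
case: h => p pA hp.
have [p0 [q0 [hpq hA]]] := edge_ends A.
suff : dist adj a w <= dist adj a p + 1 by lia.
move: pA hs; rewrite hA !inE.
case/orP=> /eqP -> /orP [] /eqP ->; try lia.
- apply: (dist_lip Hcc); exact: hpq.
- apply: (dist_lip Hcc); by case: Hs => sy _; rewrite sy.
Qed.

Lemma DS_mid (V : finType) (adj : rel V) (Hc : connected_graph adj) s (C : edgeT adj) c d :
  val C = [set c; d] -> s != inr C ->
  DS adj s (inr C) = 1 + minn (DS adj s (inl c)) (DS adj s (inl d)).
Proof.
move=> hC ns; have HcS := S_conn Hc.
have l1 : DS adj s (inr C) <= DS adj s (inl c) + 1.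
  by apply: (dist_lip HcS); rewrite /= hC !inE eqxx.
have l2 : DS adj s (inr C) <= DS adj s (inl d) + 1.
  by apply: (dist_lip HcS); rewrite /= hC !inE eqxx ?orbT.
have ns2 : inr C != s by rewrite eq_sym.
have [w [hw hd]] := dist_pred HcS ns2.
case: w hw hd => [z|B] //= hz; rewrite hC !inE in hz; case/orP: hz => /eqP -> hd;
move: l1 l2 hd; move: (DS adj s (inr C)) (DS adj s (inl c)) (DS adj s (inl d)) => u v w; lia.
Qed.

Lemma DS_lm (V : finType) (adj : rel V) (Hs : simple_graph adj) (Hc : connected_graph adj)
  (A : edgeT adj) a b z : val A = [set a; b] ->
  DS adj (inl z) (inr A) = 1 + minn (2 * dist adj z a) (2 * dist adj z b).
Proof. by move=> hA; rewrite (DS_mid Hc hA) // !DS_ll. Qed.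

Lemma DS_ml (V : finType) (adj : rel V) (Hs : simple_graph adj) (Hc : connected_graph adj)
  (A : edgeT adj) a b z : val A = [set a; b] ->
  DS adj (inr A) (inl z) = 1 + minn (2 * dist adj a z) (2 * dist adj b z).
Proof.
move=> hA; have Hcc : forall x y, connect adj x y by [].
case: (Hs) => sy _.
rewrite (dist_sym (@sadj_sym _ adj) (S_conn Hc)) (DS_lm Hs Hc z hA).
by rewrite (dist_sym sy Hcc z a) (dist_sym sy Hcc z b).
Qed.

Lemma arith (a b c d : nat) : a<=b+1 -> b<=a+1 -> c <= d+1 -> d <= c+1 -> a <= c+1 -> c <= a+1 -> b <= d+1 -> d <= b+1 -> a+d = b+c -> 2*a + (1 + minn (1 + minn (2*a) (2*c)) (1 + minn (2*b) (2*d))) = (1 + minn (2*a) (2*b)) + (1 + minn (2*a) (2*c)).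
Proof. lia. Qed.

Lemma core1 (V : finType) (adj : rel V) (Hs : simple_graph adj) (Hc : connected_graph adj)
  (A C : edgeT adj) a b c d : val A = [set a; b] -> val C = [set c; d] ->
  adj a b -> adj c d ->
  Theta (@sadj _ adj) (inl a, inr A) (inl c, inr C) -> Theta adj (a, b) (c, d).
Proof.
move=> hA hC ab cd hT; have Hcc : forall x y, connect adj x y by [].
case: (Hs) => sy irr.
have d1 x y : adj x y -> dist adj x y = 1.
  move=> hxy; have := dist_adj hxy; case: (dist adj x y) (@dist0 _ _ Hcc x y) => [|[|n]] // h.
  by have := h erefl; move=> exy; rewrite exy irr in hxy.
have lip x w z : adj w z -> dist adj x z <= dist adj x w + 1 by move=> h; apply: dist_lip.
case: (eqVneq A C) => [eAC | nAC].
  subst C; rewrite hA in hC.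
  have ca : c \in [set a; b] by rewrite hC !inE eqxx.
  have da : d \in [set a; b] by rewrite hC !inE eqxx orbT.
  have ncd : c != d by apply/eqP => e; rewrite e irr in cd.
  split => //=.
  have ba : adj b a by rewrite sy.
  move: ca da ncd cd; rewrite !inE => /orP [] /eqP -> /orP [] /eqP -> //=;
  rewrite ?eqxx // => _ _; rewrite !dist_xx (d1 a b ab) (d1 b a ba) //.
have ne : inr A != inr C :> SV adj by apply/eqP => -[e]; rewrite e eqxx in nAC.
case: hT => _ _ /=.
rewrite (DS_ll Hs Hc) (DS_lm Hs Hc a hC) (DS_ml Hs Hc c hA) (DS_mid Hc hC ne).
rewrite (DS_ml Hs Hc c hA) (DS_ml Hs Hc d hA) => h; split => //= h2; apply: h.
have dc : adj d c by rewrite sy.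
have ba : adj b a by rewrite sy.
have l1 := lip a c d cd; have l2 := lip a d c dc.
have l3 := lip b c d cd; have l4 := lip b d c dc.
have l5 := lip c a b ab; have l6 := lip c b a ba.
have l7 := lip d a b ab; have l8 := lip d b a ba.
rewrite (dist_sym sy Hcc c a) (dist_sym sy Hcc c b) in l5 l6.
rewrite (dist_sym sy Hcc d a) (dist_sym sy Hcc d b) in l7 l8.
apply: arith => //.
Qed.

Lemma Theta_flip2 (T : finType) (e : rel T) (Hs : symmetric e) s t :
  Theta e s t -> Theta e s (t.2, t.1).
Proof.
case: s t => [s1 s2] [t1 t2] [/= h1 h2 h3]; split => //=; first by rewrite Hs.
move: h3; move: (dist e s1 t1) (dist e s2 t2) (dist e s1 t2) (dist e s2 t1) => *; lia.
Qed.

Lemma Theta_flip1 (T : finType) (e : rel T) (Hs : symmetric e) s t :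
  Theta e s t -> Theta e (s.2, s.1) t.
Proof.
case: s t => [s1 s2] [t1 t2] [/= h1 h2 h3]; split => //=; first by rewrite Hs.
move: h3; move: (dist e s1 t1) (dist e s2 t2) (dist e s1 t2) (dist e s2 t1) => *; lia.
Qed.

Definition Rel (V : finType) (adj : rel V) (s : SV adj * SV adj) (g : V * V) : Prop :=
  adj g.1 g.2 /\ exists A : edgeT adj, val A = [set g.1; g.2] /\
    (s = (inl g.1, inr A) \/ s = (inr A, inl g.2)).

Lemma core2 (V : finType) (adj : rel V) (Hs : simple_graph adj) (Hc : connected_graph adj) s t g h :
  Theta (@sadj _ adj) s t -> Rel s g -> Rel t h -> Theta adj g h.
Proof.
case: (Hs) => sy _.
have sS := @sadj_sym _ adj.
case: g h => [a b] [c d] hT [/= ab [A [hA hs]]] [/= cd [C [hC ht]]].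
have hA' : val A = [set b; a] by rewrite setUC; exact: hA.
have hC' : val C = [set d; c] by rewrite setUC; exact: hC.
have ba : adj b a by rewrite sy.
have dc : adj d c by rewrite sy.
case: hs => es; case: ht => et; subst s t.
- exact: core1 hA hC ab cd hT.
- apply: (Theta_flip2 sy (t := (d, c))).
  exact: core1 hA hC' ab dc (Theta_flip2 sS hT).
- apply: (Theta_flip1 sy (s := (b, a))).
  exact: core1 hA' hC ba cd (Theta_flip1 sS hT).
- apply: (Theta_flip1 sy (s := (b, a))); apply: (Theta_flip2 sy (t := (d, c))).
  exact: core1 hA' hC' ba dc (Theta_flip1 sS (Theta_flip2 sS hT)).
Qed.

Lemma sedge_Rel (V : finType) (adj : rel V) (Hs : simple_graph adj) (r : SV adj * SV adj) :
  sadj r.1 r.2 -> exists g, Rel r g.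
Proof.
case: (Hs) => sy _.
case: r => [[a|A] [b|B]] //= h.
- have [p [q [pq hB]]] := edge_ends B.
  move: h; rewrite hB !inE => /orP [] /eqP e; subst a.
  + by exists (p, q); split => //; exists B; split => //; left.
  + exists (q, p); split => /=; first by rewrite sy.
    by exists B; split; [rewrite hB setUC | left].
- have [p [q [pq hA]]] := edge_ends A.
  move: h; rewrite hA !inE => /orP [] /eqP e; subst b.
  + exists (q, p); split => /=; first by rewrite sy.
    by exists A; split; [rewrite hA setUC | right].
  + by exists (p, q); split => //; exists A; split => //; right.
Qed.

Lemma ct_edge (T : finType) (e : rel T) s t :
  clos_trans _ (Theta e) s t -> e t.1 t.2.
Proof. by elim => [x y [] | x y z _ _ _ ]. Qed.

Theorem corollary3p2 (V : finType) (adj : rel V)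
  (Hsimple : simple_graph adj) (Hconn : connected_graph adj)
  (x y u v : V) (hxy : adj x y) (huv : adj u v) :
  ThetaStar (@sadj V adj)
    (svert adj x, smid hxy) (svert adj u, smid huv) ->
  ThetaStar adj (x, y) (u, v).
Proof.
move=> H.
have key : forall s t, clos_trans _ (Theta (@sadj V adj)) s t ->
    forall g h, Rel s g -> Rel t h -> ThetaStar adj g h.
  move=> s t; elim => [s0 t0 hT | s0 r t0 h1 IH1 h2 IH2] g h Rg Rh.
    by apply: t_step; apply: core2 hT Rg Rh.
  have [k Rk] := sedge_Rel Hsimple (ct_edge h1).
  exact: t_trans (IH1 _ _ Rg Rk) (IH2 _ _ Rk Rh).
apply: key H _ _ _ _.
- by split => //; exists (exist _ [set x; y] (is_edge_pair hxy)); split => //; left.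
- by split => //; exists (exist _ [set u; v] (is_edge_pair huv)); split => //; left.
Qed.
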